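(* Let $f$ be an invertible $\mathbb F_q$-linearised polynomial over $\mathbb F_{q^h}$ and let $a\in\mathbb F_{q^h}$. Then the map $X\mapsto f(af^{-1}(X))$ is $\mathbb F_{q^h}$-linear (i.e. equals $X\mapsto bX$ for some $b\in\mathbb F_{q^h}$) if and only if $f$ is $\mathbb F_q(a)$-semi-linear.
   Context: An $\mathbb F_q$-linearised polynomial over $\mathbb F_{q^h}$ is $\sum_{l=0}^{h-1}a_lX^{q^l}$ with $a_l\in\mathbb F_{q^h}$, viewed as a map $\mathbb F_{q^h}\to\mathbb F_{q^h}$; invertible means bijective, and $f^{-1}$ denotes the inverse map (again a linearised polynomial). For a subfield $K$ of $\mathbb F_{q^h}$, $f$ is $K$-semi-linear if there is a field automorphism $\sigma$ of $\mathbb F_{q^h}$ with $f(\alpha x)=\alpha^\sigma f(x)$ for all $\alpha\in K$ and $x\in\mathbb F_{q^h}$. *)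

(* Defs.v *)
From HB Require Import structures.
From mathcomp Require Import all_boot all_order all_algebra all_field.
Set Implicit Arguments. Unset Strict Implicit. Unset Printing Implicit Defensive.
Import GRing.Theory.
Local Open Scope ring_scope.

Definition linpoly (L : finFieldType) (q h : nat) (c : 'I_h -> L) (x : L) : L :=
  \sum_(l < h) c l * x ^+ (q ^ l).

Definition in_Fq (L : finFieldType) (q : nat) (x : L) : Prop := x ^+ q = x.

Definition in_Fqa (L : finFieldType) (q : nat) (a x : L) : Prop :=
  forall S : {pred L}, GRing.divring_closed S ->
    (forall y, in_Fq q y -> y \in S) -> a \in S -> x \in S.

Definition semilinear_on (L : finFieldType) (K : L -> Prop) (f : L -> L) : Prop :=
  exists sigma : {rmorphism L -> L}, bijective sigma /\
    forall alpha x, K alpha -> f (alpha * x) = sigma alpha * f x.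

(* Main.v *)
Require Import Defs.
From HB Require Import structures.
From mathcomp Require Import all_boot all_order all_algebra all_field all_fingroup all_solvable.
Import GRing.Theory.
Local Open Scope ring_scope.

Lemma pchar_nat_card (L : finFieldType) : [pchar L].-nat #|L|.
Proof.
have [p pr_p pc] := finPcharP L.
have /abelem_pgroup := fin_ring_pchar_abelem pc.
rewrite /pgroup cardsT => H.
by rewrite (eq_pnat _ (pcharf_eq pc)).
Qed.

Section Pow.
Variables (L : finFieldType) (n : nat) (Hn : [pchar L].-nat n).
Definition powm (_ : [pchar L].-nat n) (x : L) := x ^+ n.
Lemma powm_nmod : nmod_morphism (powm Hn).
Proof.
split; rewrite /powm; last by move=> x y; rewrite exprDn_pchar.
by rewrite expr0n; case: n Hn => //.
Qed.
Lemma powm_mon : monoid_morphism (powm Hn).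
Proof. by split; rewrite /powm ?expr1n // => x y; rewrite exprMn. Qed.
HB.instance Definition _ := GRing.isNmodMorphism.Build L L (powm Hn) powm_nmod.
HB.instance Definition _ := GRing.isMonoidMorphism.Build L L (powm Hn) powm_mon.
End Pow.
Theorem lemma5p6 (L : finFieldType) (q h : nat) (c : 'I_h -> L) (a : L)
    (finv : L -> L) :
  #|L| = (q ^ h)%N ->
  cancel (linpoly q c) finv -> cancel finv (linpoly q c) ->
  (exists b : L, forall x : L, linpoly q c (a * finv x) = b * x) <->
  semilinear_on (in_Fqa q a) (linpoly q c).
Proof.
move=> cardL fK Kf; set f := linpoly q c.
have h_gt0 : (0 < h)%N.
  case: h cardL {c f fK Kf} => // /eqP; rewrite expn0 => /eqP E.
  by have := finNzRing_gt1 L; rewrite E.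
have q_gt0 : (0 < q)%N by move: cardL; case: (q) => //; rewrite exp0n // => E; have := finNzRing_gt1 L; rewrite E.
have Hq : [pchar L].-nat q.
  apply: (pnat_dvd _ (pchar_nat_card L)); rewrite cardL.
  by rewrite -(prednK h_gt0) expnS dvdn_mulr.
have Hqj j : [pchar L].-nat (q ^ j)%N by rewrite pnatX Hq.
have fD x y : f (x + y) = f x + f y.
  rewrite /f /linpoly -big_split /=; apply: eq_bigr => l _.
  by rewrite exprDn_pchar // mulrDr.
have f0 : f 0 = 0.
  rewrite /f /linpoly big1 // => l _; by rewrite expr0n expn_eq0 eqn0Ngt q_gt0 mulr0.
have fN x : f (- x) = - f x.
  by apply/eqP; rewrite -subr_eq0 opprK -fD addNr f0.
have fsum (I : finType) (F : I -> L) : f (\sum_i F i) = \sum_i f (F i).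
  apply: (big_ind2 (fun u v => f u = v)) => //; first by move=> ? ? ? ? <- <-.
have fFq s x : s ^+ q = s -> f (s * x) = s * f x.
  move=> Hs.
  have E k : s ^+ (q ^ k)%N = s.
    elim: k => [|k IH]; first by rewrite expn0 expr1.
    by rewrite expnSr exprM IH.
  rewrite /f /linpoly mulr_sumr; apply: eq_bigr => l _.
  by rewrite exprMn mulrCA E.
split.
- case=> b Hb.
  have H1 y : f (a * y) = b * f y by have := Hb (f y); rewrite fK.
  have Hpow i y : f (a ^+ i * y) = b ^+ i * f y.
    elim: i y => [|i IH] y; first by rewrite !expr0 !mul1r.
    by rewrite exprSr -mulrA IH H1 mulrA -exprSr.
  have Fqpow s k : s ^+ q = s -> s ^+ (q ^ k)%N = s.
    move=> Hs; elim: k => [|k IH]; first by rewrite expn0 expr1.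
    by rewrite expnSr exprM IH.
  pose P : {poly L} := \prod_(j < h) ('X - (a ^+ (q ^ j)%N)%:P).
  have Pcoef i : P`_i ^+ q = P`_i.
    have -> : P`_i ^+ q = (map_poly (@powm L q Hq) P)`_i by rewrite coef_map.
    rewrite rmorph_prod; congr (_`_i).
    have mX (z : L) : map_poly (@powm L q Hq) ('X - z%:P) = 'X - (z ^+ q)%:P by rewrite map_polyXsubC.
    rewrite (eq_bigr (fun j : 'I_h => 'X - (a ^+ (q ^ j.+1)%N)%:P)); last first.
      by move=> j _; apply: (etrans (mX _)); rewrite -exprM -expnSr.
    rewrite /P; clear -cardL h_gt0; move: cardL h_gt0; case: h => // h' cardL _.
    rewrite big_ord_recr big_ord_recl /= mulrC -cardL expf_card expn0 expr1.
    by [].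
  have Pa : P.[a] = 0.
    rewrite horner_prod; apply/eqP/prodf_eq0; exists (Ordinal h_gt0) => //.
    by rewrite !hornerE expn0 expr1 subrr.
  have fP y : f (P.[a] * y) = P.[b] * f y.
    rewrite !horner_coef !mulr_suml fsum; apply: eq_bigr => i _.
    by rewrite -mulrA fFq ?Pcoef // Hpow mulrA.
  have Pb : P.[b] = 0.
    by have := fP (finv 1); rewrite Pa mul0r f0 /f Kf mulr1.
  move: Pb; rewrite horner_prod => /eqP/prodf_eq0 [j _].
  rewrite !hornerE subr_eq0 => /eqP bE.
  pose sigma : {rmorphism L -> L} := @powm L _ (Hqj j).
  exists sigma; split; first exact: injF_bij (fmorph_inj _).
  move=> alpha x Ha.
  pose S := [pred u : L | [forall y, f (u * y) == sigma u * f y]].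
  suff : alpha \in S by move=> /forallP /(_ x) /eqP.
  apply: Ha.
  + split.
    * by apply/forallP => y; rewrite rmorph1 !mul1r.
    * move=> u v /forallP Hu /forallP Hv; apply/forallP => y.
      by rewrite mulrBl fD fN (eqP (Hu y)) (eqP (Hv y)) rmorphB mulrBl.
    * move=> u v /forallP Hu /forallP Hv; apply/forallP => y.
      have [->|v0] := eqVneq v 0; first by rewrite invr0 mulr0 rmorph0 !mul0r f0.
      have Hvy : f (v^-1 * y) = sigma v^-1 * f y.
        have := eqP (Hv (v^-1 * y)); rewrite mulrA mulfV // mul1r => ->.
        by rewrite fmorphV mulrA mulVf ?mul1r // fmorph_eq0.
      by rewrite -mulrA (eqP (Hu _)) Hvy rmorphM mulrA.
  + move=> y Hy; apply/forallP => z.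
    by rewrite fFq // (_ : sigma y = y) //; apply: Fqpow.
  + by apply/forallP => z; rewrite H1 /sigma /powm bE.
- case=> sigma [_ Hs]; exists (sigma a) => x.
  rewrite Hs; first by rewrite /f Kf.
  by move=> S _ _.
Qed.
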